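(* Let $k\ge 1$, let $G=K_2\vee\overline{K_k}$, and let $v$ be a vertex of degree $2$ in $G$. If $p\ge\max\{4,\Delta(G)\}$, then $G$ is $f_{p,v}$-edge-orientable.
   Context: $G_1\vee G_2$ denotes the join: the disjoint union of $G_1$ and $G_2$ plus all edges between them. $\overline{K_k}$ is the edgeless graph on $k$ vertices. An orientation of a graph $H$ is any digraph obtained by replacing each edge $uv$ with the arc $(u,v)$, with the arc $(v,u)$, or with both arcs. A kernel of a digraph $D$ is an independent set $S$ such that every vertex of $D-S$ has an out-neighbor in $S$. $D$ is kernel-perfect if every induced subdigraph of $D$ has a kernel. For $f:V(H)\to\mathbb{N}$, an orientation $D$ of $H$ is $f$-kernel-perfect if it is kernel-perfect and $f(v)\ge 1+d^+_D(v)$ for all $v$. For $f:E(G)\to\mathbb{N}$, $G$ is $f$-edge-orientable if its line graph $L(G)$ admits an $f$-kernel-perfect orientation. For $v\in V(G)$, define $f_{p,v}:E(G)\to\mathbb{N}$ by $f_{p,v}(e)=d_G(v)$ if $e$ is incident to $v$, and $f_{p,v}(e)=p$ otherwise. *)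

(* Defs.v *)
From mathcomp Require Import all_boot.
Set Implicit Arguments.
Unset Strict Implicit.
Unset Printing Implicit Defensive.

Section Digraph.
Variable U : finType.

Definition is_kernel (D : rel U) (W S : {set U}) : Prop :=
  S \subset W /\
  (forall x y, x \in S -> y \in S -> ~~ D x y) /\
  (forall x, x \in W -> x \notin S -> exists2 y, y \in S & D x y).

Definition kernel_perfect (VH : {set U}) (D : rel U) : Prop :=
  forall W : {set U}, W \subset VH -> exists S : {set U}, is_kernel D W S.

Definition orientation_of (VH : {set U}) (h : rel U) (D : rel U) : Prop :=
  (forall x y, D x y -> [/\ x \in VH, y \in VH & h x y]) /\
  (forall x y, x \in VH -> y \in VH -> h x y -> D x y || D y x).

Definition outdeg (VH : {set U}) (D : rel U) (x : U) : nat :=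
  #|[set y in VH | D x y]|.

Definition f_kernel_perfect_orientation (VH : {set U}) (h : rel U)
    (f : U -> nat) (D : rel U) : Prop :=
  [/\ orientation_of VH h D, kernel_perfect VH D &
      forall x, x \in VH -> 1 + outdeg VH D x <= f x].
End Digraph.

Section Graph.
Variable T : finType.
Variable g : rel T.   (* intended symmetric and irreflexive *)

Definition deg (v : T) : nat := #|[set u | g v u]|.
Definition maxdeg : nat := \max_(u : T) deg u.

Definition edges : {set {set T}} :=
  [set A : {set T} | [exists x, exists y, g x y && (A == [set x; y])]].

Definition line_adj : rel {set T} :=
  fun A B => (A != B) && (A :&: B != set0).

Definition f_edge_orientable (f : {set T} -> nat) : Prop :=
  exists D : rel {set T}, f_kernel_perfect_orientation edges line_adj f D.

Definition f_pv (p : nat) (v : T) : {set T} -> nat :=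
  fun e => if v \in e then deg v else p.
End Graph.

(* vertices 'I_(k+2); vertices 0 and 1 form the K_2, the others are
   the independent set of size k; join edges everything with {0,1}. *)
Definition K2_join_Kbar (k : nat) : rel 'I_(k + 2) :=
  fun x y => (x != y) && ((nat_of_ord x < 2) || (nat_of_ord y < 2)).
Arguments K2_join_Kbar k : clear implicits.

(* Main.v *)
Require Import Defs.
From mathcomp Require Import all_boot zify.

Lemma set2_inj {T : finType} {u x a b : T} : u != x -> a != b ->
  [set u; x] = [set a; b] -> (a = u /\ b = x) \/ (a = x /\ b = u).
Proof.
move=> ux ab E.
have ha : a \in [set u; x] by rewrite E set21.
have hb : b \in [set u; x] by rewrite E set22.
have hu : u \in [set a; b] by rewrite -E set21.
have hx : x \in [set a; b] by rewrite -E set22.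
move/set2P: ha => [ea|ea]; move/set2P: hb => [eb|eb].
- by move: ab; rewrite ea eb eqxx.
- by left.
- by right.
- by move: ab; rewrite ea eb eqxx.
Qed.

Lemma kp_ws (U : finType) (VH : {set U}) (D : rel U) :
  (forall x, ~~ D x x) ->
  (forall W : {set U}, W \subset VH -> W != set0 ->
     (exists2 x, x \in W & forall y, y \in W -> ~~ D x y) \/
     (exists S, is_kernel D W S)) ->
  kernel_perfect VH D.
Proof.
move=> Dirr H W sW0.
have main : forall m (W : {set U}), #|W| < m -> W \subset VH -> exists S, is_kernel D W S.
  elim=> [//|m IH] W0 hW sW.
  have [->|nW] := eqVneq W0 set0.
    exists set0; split; first exact: sub0set.
    split; first by move=> x y; rewrite in_set0.
    by move=> x; rewrite in_set0.
  have [[x xW xs]|//] := H W0 sW nW.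
  set W' := [set y in W0 | ~~ D y x && (y != x)].
  have sW' : W' \subset W0 by apply/subsetP=> y; rewrite inE => /andP[].
  have cW' : #|W'| < #|W0|.
    apply: proper_card; apply/properP; split => //; exists x => //.
    by rewrite inE eqxx !andbF.
  have [S' [sS' [iS' aS']]] := IH W' (leq_trans cW' (ltnSE hW)) (subset_trans sW' sW).
  exists (x |: S'); split.
    by rewrite subUset sub1set xW (subset_trans sS' sW').
  split.
    move=> s t; rewrite !inE => /orP[/eqP->|sS] /orP[/eqP->|tS].
    - exact: Dirr.
    - by apply: xs; apply: (subsetP sW'); apply: (subsetP sS').
    - by have := subsetP sS' s sS; rewrite inE => /and3P[].
    - exact: iS'.
  move=> y yW; rewrite !inE negb_or => /andP[yx yS].
  case Dyx: (D y x); first by exists x; rewrite ?inE ?eqxx.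
  have yW' : y \in W' by rewrite inE yW Dyx yx.
  have [z zS Dyz] := aS' y yW' yS.
  by exists z; rewrite // inE zS orbT.
exact: (main #|W|.+1).
Qed.

Set Implicit Arguments.
Unset Strict Implicit.

Definition o0 k : 'I_(k+2) := Ordinal (ltn_addl k (isT : 0 < 2)).
Definition o1 k : 'I_(k+2) := Ordinal (ltn_addl k (isT : 1 < 2)).

Section Main.
Variable k : nat.
Variable w : 'I_(k+2).
Hypothesis hw : 2 <= w.
Local Notation g := (K2_join_Kbar k).
Local Notation E := (edges g).

Lemma edgeP (e : {set 'I_(k+2)}) :
  reflect (exists u x, [/\ g u x, nat_of_ord u < 2 & e = [set u; x]]) (e \in E).
Proof.
apply: (iffP idP).
  rewrite inE => /existsP[x /existsP[y /andP[gxy /eqP->]]].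
  move: (gxy); rewrite /K2_join_Kbar => /andP[xy /orP[x2|y2]].
    by exists x, y.
  exists y, x; split => //; last by rewrite setUC.
  by rewrite /K2_join_Kbar eq_sym xy y2.
move=> [u [x [gux _ ->]]]; rewrite inE; apply/existsP; exists u; apply/existsP; exists x.
by rewrite gux eqxx.
Qed.

Lemma gsym (x y : 'I_(k+2)) : g x y = g y x.
Proof. by rewrite /K2_join_Kbar eq_sym orbC. Qed.

Lemma edge_set2 (u x : 'I_(k+2)) : ([set u; x] \in E) = g u x.
Proof.
apply/idP/idP; last first.
  by move=> gux; rewrite inE; apply/existsP; exists u; apply/existsP; exists x; rewrite gux eqxx.
move/edgeP=> [a [b [gab _ Eab]]].
have ab : a != b by move: gab => /andP[].
have ux : u != x.
  apply/negP=> /eqP ux; move: Eab; rewrite ux setUid => Eab.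
  have : a \in [set x] by rewrite Eab set21.
  have : b \in [set x] by rewrite Eab set22.
  by rewrite !inE => /eqP bx /eqP ax; move: ab; rewrite ax bx eqxx.
by have [[ea eb]|[ea eb]] := set2_inj ux ab Eab; rewrite -ea -eb // gsym.
Qed.


Definition Gts (x : 'I_(k+2)) := [set z : 'I_(k+2) | (2 <= z) && (nat_of_ord z != nat_of_ord w) && (x < z)].
Definition Lts (x : 'I_(k+2)) := [set z : 'I_(k+2) | (2 <= z) && (nat_of_ord z != nat_of_ord w) && (z < x)].
Definition abet (u : 'I_(k+2)) : bool := (nat_of_ord u == nat_of_ord w) || (#|Lts u| <= #|Gts u|).

Definition rk (u x : 'I_(k+2)) : nat :=
  if nat_of_ord u == 0 then
    (if nat_of_ord x == nat_of_ord w then k+4 else if nat_of_ord x == 1 then k+3 else if nat_of_ord x == 0 then 0 else nat_of_ord x)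
  else if nat_of_ord u == 1 then
    (if nat_of_ord x == nat_of_ord w then k+4 else if nat_of_ord x == 0 then k+3 else if nat_of_ord x == 1 then 0 else k+2 - nat_of_ord x)
  else (if nat_of_ord x == 0 then nat_of_bool (abet u) else if nat_of_ord x == 1 then nat_of_bool (~~ abet u) else 0).

Definition D : rel {set 'I_(k+2)} := fun e f =>
  (e \in E) && (f \in E) && [exists u, exists x, exists y,
     [&& u != x, u != y, e == [set u; x], f == [set u; y] & rk u x < rk u y]].

Lemma DP e f : reflect ([/\ e \in E, f \in E & exists u x y,
   [/\ u != x, u != y, e = [set u; x], f = [set u; y] & rk u x < rk u y]]) (D e f).
Proof.
apply: (iffP idP).
  move=> /andP[/andP[eE fE] /existsP[u /existsP[x /existsP[y /and5P[ux uy /eqP ee /eqP fe r]]]]].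
  by split=> //; exists u, x, y.
move=> [eE fE [u [x [y [ux uy ee fe r]]]]].
rewrite /D eE fE /=; apply/existsP; exists u; apply/existsP; exists x; apply/existsP; exists y.
by rewrite ux uy ee fe r !eqxx.
Qed.

Lemma Dirr e : ~~ D e e.
Proof.
apply/negP=> /DP[_ _ [u [x [y [ux uy ee fe r]]]]].
have [[_ yx]|[ux' _]] := set2_inj ux uy (etrans (esym ee) fe).
  by rewrite yx ltnn in r.
by move: ux; rewrite ux' eqxx.
Qed.

Lemma Dcommon e f : D e f -> exists2 u, u \in e & u \in f.
Proof.
move=> /DP[_ _ [u [x [y [_ _ -> -> _]]]]]; exists u; exact: set21.
Qed.

Lemma nosink (W : {set {set 'I_(k+2)}}) u x : u != x ->
  (forall y, [set u; y] \in W -> y != x -> rk u y < rk u x) ->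
  (forall y, [set x; y] \in W -> y != u -> rk x y < rk x u) ->
  forall f, f \in W -> ~~ D [set u; x] f.
Proof.
move=> ux h1 h2 f fW; apply/negP => /DP[_ _ [a [b [c [ab ac ee fe r]]]]].
have [[au bx]|[ax bu]] := set2_inj ux ab ee.
  rewrite au bx in fe r ac.
  have [cx|cx] := eqVneq c x; first by rewrite cx ltnn in r.
  by have := h1 c (eq_ind f (fun s => s \in W) fW _ fe) cx; rewrite ltnNge ltnW.
rewrite ax bu in fe r ac.
have [cu|cu] := eqVneq c u; first by rewrite cu ltnn in r.
by have := h2 c (eq_ind f (fun s => s \in W) fW _ fe) cu; rewrite ltnNge ltnW.
Qed.

Lemma ord01 (u : 'I_(k+2)) : nat_of_ord u < 2 -> u = o0 k \/ u = o1 k.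
Proof. by case: u => [[|[|m]] hm] // _; [left|right]; apply/val_inj. Qed.

Lemma big2 (x : 'I_(k+2)) : x != o0 k -> x != o1 k -> 1 < x.
Proof.
move=> h0 h1; rewrite ltnNge; apply/negP=> hx.
have [e|e] := ord01 hx; by rewrite e eqxx in h0 h1.
Qed.

Lemma edge_form e : e \in E ->
  exists x, (e = [set o0 k; x] /\ x != o0 k) \/ (e = [set o1 k; x] /\ x != o1 k).
Proof.
move/edgeP=> [u [x [gux u2 ->]]]; exists x.
have ux : u != x by move: gux => /andP[].
by have [eu|eu] := ord01 u2; rewrite -eu; [left|right]; rewrite eq_sym.
Qed.

Lemma nonedge (x y : 'I_(k+2)) : 1 < x -> 1 < y -> [set x; y] \notin E.
Proof. move=> hx hy; rewrite edge_set2 /K2_join_Kbar; apply/negP=> /andP[_]; lia. Qed.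

Lemma eq0 (x : 'I_(k+2)) : (x == o0 k) = (nat_of_ord x == 0).
Proof. by rewrite -val_eqE. Qed.
Lemma eq1 (x : 'I_(k+2)) : (x == o1 k) = (nat_of_ord x == 1).
Proof. by rewrite -val_eqE. Qed.
Lemma eqw (x : 'I_(k+2)) : (x == w) = (nat_of_ord x == nat_of_ord w).
Proof. by rewrite -val_eqE. Qed.

Lemma rk0 (x : 'I_(k+2)) : rk (o0 k) x =
  if nat_of_ord x == nat_of_ord w then k+4 else if nat_of_ord x == 1 then k+3 else if nat_of_ord x == 0 then 0 else nat_of_ord x.
Proof. by []. Qed.
Lemma rk1 (x : 'I_(k+2)) : rk (o1 k) x =
  if nat_of_ord x == nat_of_ord w then k+4 else if nat_of_ord x == 0 then k+3 else if nat_of_ord x == 1 then 0 else k+2 - nat_of_ord x.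
Proof. by []. Qed.
Lemma rku (u x : 'I_(k+2)) : 1 < u -> rk u x =
  if nat_of_ord x == 0 then nat_of_bool (abet u) else if nat_of_ord x == 1 then nat_of_bool (~~ abet u) else 0.
Proof. by move=> hu; rewrite /rk; case: eqP => ?; [lia|]; case: eqP => ?; [lia|]. Qed.
Lemma abetw : abet w.
Proof. by rewrite /abet eqxx. Qed.

Ltac rkt := repeat (case: eqP => /= ?); try lia.

Lemma rk0_le x : rk (o0 k) x <= k+4.
Proof. have := ltn_ord x; rewrite rk0; rkt. Qed.
Lemma rk0_big x : k+3 < rk (o0 k) x -> x = w.
Proof. move=> h; apply/val_inj; have := ltn_ord x; move: h; rewrite rk0; rkt. Qed.
Lemma rk0_inj x y : nat_of_ord x != 0 -> nat_of_ord y != 0 -> rk (o0 k) x = rk (o0 k) y -> x = y.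
Proof.
move=> hx hy h; apply/val_inj; have := ltn_ord x; have := ltn_ord y; have := ltn_ord w.
move: h hx hy; rewrite !rk0; rkt.
Qed.
Lemma rk1_le x : rk (o1 k) x <= k+4.
Proof. have := ltn_ord x; rewrite rk1; rkt. Qed.
Lemma rk1_big x : k+3 < rk (o1 k) x -> x = w.
Proof. move=> h; apply/val_inj; have := ltn_ord x; move: h; rewrite rk1; rkt. Qed.
Lemma rk1_inj x y : nat_of_ord x != 1 -> nat_of_ord y != 1 -> rk (o1 k) x = rk (o1 k) y -> x = y.
Proof.
move=> hx hy h; apply/val_inj; have := ltn_ord x; have := ltn_ord y; have := ltn_ord w.
move: h hx hy; rewrite !rk1; rkt.
Qed.

Lemma amax (P : pred 'I_(k+2)) (F : 'I_(k+2) -> nat) z0 : P z0 ->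
  exists2 a, P a & forall j, P j -> F j <= F a.
Proof. by move=> h; case: (arg_maxnP F h) => a Pa ma; exists a. Qed.

Lemma edge_big (x y : 'I_(k+2)) : 1 < x -> [set x; y] \in E -> y = o0 k \/ y = o1 k.
Proof. move=> hx; rewrite edge_set2 /K2_join_Kbar => /andP[_ h]; apply: ord01; lia. Qed.

Lemma e01 : [set o1 k; o0 k] = [set o0 k; o1 k].
Proof. exact: setUC. Qed.

Lemma Ane0 z : [set o0 k; z] \in E -> z != o0 k.
Proof. by rewrite edge_set2 /K2_join_Kbar => /andP[]; rewrite eq_sym. Qed.
Lemma Bne1 z : [set o1 k; z] \in E -> z != o1 k.
Proof. by rewrite edge_set2 /K2_join_Kbar => /andP[]; rewrite eq_sym. Qed.

Lemma v0 : nat_of_ord (o0 k) = 0. Proof. by []. Qed.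
Lemma v1 : nat_of_ord (o1 k) = 1. Proof. by []. Qed.
Lemma w0 : (w == o0 k) = false.
Proof. by rewrite eq0; apply/negbTE; rewrite -lt0n; apply: leq_trans hw. Qed.
Lemma w1 : (w == o1 k) = false.
Proof. by rewrite eq1; apply/negP=> /eqP e; move: hw; rewrite e. Qed.
Lemma rk0_1 : rk (o0 k) (o1 k) = k+3.
Proof. by rewrite rk0 v1 eq_sym -eq1 w1. Qed.
Lemma rk0_w : rk (o0 k) w = k+4.
Proof. by rewrite rk0 eqxx. Qed.
Lemma rk1_0 : rk (o1 k) (o0 k) = k+3.
Proof. by rewrite rk1 v0 eq_sym -eq0 w0. Qed.
Lemma rk1_w : rk (o1 k) w = k+4.
Proof. by rewrite rk1 eqxx. Qed.
End Main.

Section K.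
Variable k : nat.
Variable w : 'I_(k+2).
Hypothesis hw : 1 < w.
Local Notation g := (K2_join_Kbar k).
Local Notation E := (edges g).
Local Notation D := (@D k w).
Local Notation rk := (@rk k w).
Local Notation A x := [set o0 k; x].
Local Notation B x := [set o1 k; x].

Lemma kerH (W : {set {set 'I_(k+2)}}) : W \subset E -> W != set0 ->
  (exists2 x, x \in W & forall y, y \in W -> ~~ D x y) \/ (exists S, is_kernel D W S).
Proof.
move=> sWE nW.
have WE x : x \in W -> x \in E by move=> h; apply: (subsetP sWE).
have hA z : A z \in W -> z != o0 k by move=> h; apply: Ane0; apply: WE.
have hB z : B z \in W -> z != o1 k by move=> h; apply: Bne1; apply: WE.
have ebig (x y : 'I_(k+2)) : 1 < x -> [set x; y] \in W -> y = o0 k \/ y = o1 k.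
  by move=> H1 H2; exact: (edge_big hw H1 (WE _ H2)).
have swap (x y : 'I_(k+2)) : [set x; y] = [set y; x] by apply: setUC.
have o01 : o0 k != o1 k by [].
case: (boolP [exists z, A z \in W]) => [/existsP[z0 Pz0]|nA].
  have [a Pa ma] := @amax k (fun z => A z \in W) (rk (o0 k)) z0 Pz0.
  have a0 := hA a Pa.
  have sa j : A j \in W -> j != a -> rk (o0 k) j < rk (o0 k) a.
    move=> hj ja; rewrite ltn_neqAle ma // andbT; apply/negP=> /eqP h.
    move/negP: ja; apply; apply/eqP; apply: (rk0_inj hw) h.
      by rewrite -eq0 hA.
    by rewrite -eq0.
  have [a1|a1] := eqVneq a (o1 k).
    rewrite a1 in Pa ma sa.
    have Pb0 : B (o0 k) \in W by rewrite e01.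
    have [b Pb mb] := @amax k (fun z => B z \in W) (rk (o1 k)) _ Pb0.
    have sb j : B j \in W -> j != b -> rk (o1 k) j < rk (o1 k) b.
      move=> hj jb; rewrite ltn_neqAle mb // andbT; apply/negP=> /eqP h.
      move/negP: jb; apply; apply/eqP; apply: (rk1_inj hw) h.
        by rewrite -eq1 hB.
      by rewrite -eq1 hB.
    have [b0|b0] := eqVneq b (o0 k).
      left; exists (A (o1 k)) => //.
      apply: nosink => //.
      by move=> y hy y0; rewrite -b0; apply: sb; rewrite // b0.
    have bw : b = w.
      apply: (rk1_big hw); have := sb _ Pb0; rewrite eq_sym b0 => /(_ isT).
      by rewrite (rk1_0 hw).
    rewrite bw in Pb sb.
    left; exists (B w) => //.
    apply: nosink => //.
      by rewrite eq_sym (w1 hw).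
    move=> y hy y1.
    have [y0|y0] := ebig w y hw hy; last by rewrite y0 eqxx in y1.
    rewrite y0 swap in hy.
    by have := ma _ hy; rewrite rk0_w (rk0_1 hw) leq_add2l.
  have a2 : 1 < a := big2 a0 a1.
  case: (boolP [exists z, B z \in W]) => [/existsP[zb Pzb]|nB].
    have [b Pb mb] := @amax k (fun z => B z \in W) (rk (o1 k)) _ Pzb.
    have sb j : B j \in W -> j != b -> rk (o1 k) j < rk (o1 k) b.
      move=> hj jb; rewrite ltn_neqAle mb // andbT; apply/negP=> /eqP h.
      move/negP: jb; apply; apply/eqP; apply: (rk1_inj hw) h.
        by rewrite -eq1 hB.
      by rewrite -eq1 hB.
    have b1 := hB b Pb.
    have [b0|b0] := eqVneq b (o0 k).
      have Pa1 : A (o1 k) \in W by rewrite -e01 -b0.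
      have aw : a = w.
        apply: (rk0_big hw); have := sa _ Pa1; rewrite eq_sym a1 => /(_ isT).
        by rewrite (rk0_1 hw).
      rewrite aw in Pa sa.
      left; exists (A w) => //.
      apply: nosink => //.
        by rewrite eq_sym (w0 hw).
      move=> y hy y0; rewrite !(rku hw) // abetw.
      by move: y0; rewrite eq0 => /negbTE->; case: (_ == 1).
    have b2 : 1 < b by apply: big2.
    have [ba|ba] := eqVneq b a.
      rewrite ba in Pb sb.
      case ab: (abet w a).
        left; exists (A a) => //.
        apply: nosink => //; first by rewrite eq_sym.
        move=> y hy y0; rewrite !(rku hw) // ab.
        by move: y0; rewrite eq0 => /negbTE->; case: (_ == 1).
      left; exists (B a) => //.
      apply: nosink => //; first by rewrite eq_sym.
      move=> y hy y1; rewrite !(rku hw) // ab.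
      by move: y1; rewrite eq1 => /negbTE->; case: (_ == 0).
    right; exists [set A a; B b].
    split.
      by apply/subsetP=> x; rewrite !inE => /orP[/eqP->|/eqP->].
    split.
      have nAB : ~~ D (A a) (B b).
        apply/negP=> /Dcommon [u]; rewrite !inE => /orP[/eqP->|/eqP->] /orP[/eqP e|/eqP e].
        - by rewrite e eqxx in o01.
        - by rewrite -e eqxx in b0.
        - by rewrite e eqxx in a1.
        - by rewrite e eqxx in ba.
      have nBA : ~~ D (B b) (A a).
        apply/negP=> /Dcommon [u]; rewrite !inE => /orP[/eqP->|/eqP->] /orP[/eqP e|/eqP e].
        - by rewrite e eqxx in o01.
        - by rewrite -e eqxx in a1.
        - by rewrite e eqxx in b0.
        - by rewrite e eqxx in ba.
      by move=> s t; rewrite !inE => /orP[/eqP->|/eqP->] /orP[/eqP->|/eqP->]; rewrite ?Dirr.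
    move=> y yW; rewrite !inE negb_or => /andP[ya yb].
    have [z [[ez zz0]|[ez zz1]]] := edge_form (WE _ yW).
      exists (A a); first by rewrite !inE eqxx.
      rewrite ez in yW ya *.
      apply/DP; split; [exact: WE | exact: WE Pa | exists (o0 k), z, a; split] => //.
      - by rewrite eq_sym.
      - by rewrite eq_sym.
      apply: sa => //; apply/negP=> /eqP za; by rewrite za eqxx in ya.
    exists (B b); first by rewrite !inE eqxx orbT.
    rewrite ez in yW yb *.
    apply/DP; split; [exact: WE | exact: WE Pb | exists (o1 k), z, b; split] => //.
    - by rewrite eq_sym.
    - by rewrite eq_sym.
    apply: sb => //; apply/negP=> /eqP zbe; by rewrite zbe eqxx in yb.
  left; exists (A a) => //.
  apply: nosink => //; first by rewrite eq_sym.
  move=> y hy y0.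
  have [y0'|y1] := ebig a y a2 hy; first by rewrite y0' eqxx in y0.
  by rewrite y1 swap in hy; move/existsPn: nB => /(_ a); rewrite hy.
have [y yW] := set0Pn _ nW.
have [z [[ez zz0]|[ez zz1]]] := edge_form (WE _ yW).
  by move/existsPn: nA => /(_ z); rewrite -ez yW.
rewrite ez in yW.
have [b Pb mb] := @amax k (fun z => B z \in W) (rk (o1 k)) _ yW.
have sb j : B j \in W -> j != b -> rk (o1 k) j < rk (o1 k) b.
  move=> hj jb; rewrite ltn_neqAle mb // andbT; apply/negP=> /eqP h.
  move/negP: jb; apply; apply/eqP; apply: (rk1_inj hw) h.
    by rewrite -eq1 hB.
  by rewrite -eq1 hB.
have b1 := hB b Pb.
have b0 : b != o0 k.
  by apply/negP=> /eqP b0; rewrite b0 e01 in Pb; move/existsPn: nA => /(_ (o1 k)); rewrite Pb.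
have b2 : 1 < b := big2 b0 b1.
left; exists (B b) => //.
apply: nosink => //; first by rewrite eq_sym.
move=> x hx x1.
have [x0|x1'] := ebig b x b2 hx; last by rewrite x1' eqxx in x1.
by rewrite x0 swap in hx; move/existsPn: nA => /(_ b); rewrite hx.
Qed.
End K.

Set Implicit Arguments.
Unset Strict Implicit.

Section O.
Variable k : nat.
Variable w : 'I_(k+2).
Hypothesis hw : 1 < w.
Local Notation g := (K2_join_Kbar k).
Local Notation E := (edges g).
Local Notation D := (@D k w).
Local Notation rk := (@rk k w).

Definition N (u x : 'I_(k+2)) := #|[set y | rk u x < rk u y]|.

Lemma cardU_le (T : finType) (A B : {set T}) : #|A :|: B| <= #|A| + #|B|.
Proof. by rewrite -cardsUI leq_addr. Qed.

Lemma outb (u x : 'I_(k+2)) : u != x ->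
  outdeg E D [set u; x] <= N u x + N x u.
Proof.
move=> ux; rewrite /outdeg.
apply: leq_trans (_ : #|[set [set u; y] | y in [set y | rk u x < rk u y]] :|:
                       [set [set x; y] | y in [set y | rk x u < rk x y]]| <= _); last first.
  by apply: leq_trans (cardU_le _ _) _; apply: leq_add; apply: leq_imset_card.
apply: subset_leq_card; apply/subsetP=> f; rewrite inE => /andP[_ /DP[_ _ [a [b [c [ab ac ee fe r]]]]]].
have [[au bx]|[ax bu]] := set2_inj ux ab ee.
  by rewrite inE; apply/orP; left; apply/imsetP; exists c; [rewrite inE -au -bx | rewrite fe au].
by rewrite inE; apply/orP; right; apply/imsetP; exists c; [rewrite inE -ax -bu | rewrite fe ax].
Qed.

Lemma edge_at e u : e \in E -> u \in e -> exists a, e = [set u; a] /\ g u a.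
Proof.
move/edgeP=> [c [d [gcd _ ->]]] /set2P[->|->].
  by exists d.
by exists c; rewrite setUC gsym.
Qed.

Lemma rk_injg (u a b : 'I_(k+2)) : g u a -> g u b -> a != b -> rk u a != rk u b.
Proof.
rewrite /K2_join_Kbar => /andP[ua hua] /andP[ub hub] ab.
have [u0|u0] := eqVneq (nat_of_ord u) 0.
  have eu : u = o0 k by apply/eqP; rewrite eq0 u0.
  rewrite eu in ua ub *; apply/negP=> /eqP h; move/negP: ab; apply; apply/eqP.
  by apply: (rk0_inj hw) h; rewrite -eq0 eq_sym.
have [u1|u1] := eqVneq (nat_of_ord u) 1.
  have eu : u = o1 k by apply/eqP; rewrite eq1 u1.
  rewrite eu in ua ub *; apply/negP=> /eqP h; move/negP: ab; apply; apply/eqP.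
  by apply: (rk1_inj hw) h; rewrite -eq1 eq_sym.
have u2 : 1 < u by lia.
have a2 : a < 2 by move: hua; case: (ltnP u 2) => //; lia.
have b2 : b < 2 by move: hub; case: (ltnP u 2) => //; lia.
rewrite !(rku hw) //.
have : nat_of_ord a != nat_of_ord b by [].
by case: (abet w u); move: a2 b2; case: (nat_of_ord a) => [|[|]] //; case: (nat_of_ord b) => [|[|]].
Qed.

Lemma orient : orientation_of E (line_adj (T:=_)) D.
Proof.
split.
  move=> x y Dxy; have /DP[xE yE _] := Dxy; split => //.
  rewrite /line_adj; apply/andP; split.
    by apply/negP=> /eqP xy; rewrite xy in Dxy; move: Dxy; rewrite (negbTE (Dirr _ _)).
  have [u ux uy] := Dcommon Dxy; apply/set0Pn; exists u; by rewrite inE ux uy.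
move=> x y xE yE /andP[xy /set0Pn[u]]; rewrite inE => /andP[ux uy].
have [a [ex ga]] := edge_at xE ux.
have [b [ey gb]] := edge_at yE uy.
have ab : a != b by apply/negP=> /eqP ab; move: xy; rewrite ex ey ab eqxx.
have ua : u != a by move: ga => /andP[].
have ub : u != b by move: gb => /andP[].
have := rk_injg ga gb ab.
case: (ltngtP (rk u a) (rk u b)) => // h _; apply/orP; [left|right]; apply/DP.
  by split => //; exists u, a, b.
by split => //; exists u, b, a.
Qed.
End O.

Set Implicit Arguments.
Unset Strict Implicit.

Section P.
Variable k : nat.
Variable w : 'I_(k+2).
Hypothesis hw : 1 < w.
Local Notation rk := (@rk k w).
Local Notation N := (@N k w).

Lemma leq_set0 (T : finType) (A : {set T}) : (forall y, y \in A -> False) -> #|A| <= 0.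
Proof. move=> h; rewrite leqn0 cards_eq0; apply/eqP/setP=> y; rewrite inE; apply/negP=> /h. by []. Qed.

Lemma leq_set1 (T : finType) (A : {set T}) a : (forall y, y \in A -> y = a) -> #|A| <= 1.
Proof. move=> h; rewrite -(cards1 a); apply: subset_leq_card; apply/subsetP=> y /h ->; exact: set11. Qed.

Lemma N01 : N (o0 k) (o1 k) <= 1.
Proof. apply: (leq_set1 (a := w)) => y; rewrite inE (rk0_1 hw); exact: rk0_big. Qed.
Lemma N10 : N (o1 k) (o0 k) <= 1.
Proof. apply: (leq_set1 (a := w)) => y; rewrite inE (rk1_0 hw); exact: rk1_big. Qed.
Lemma N0w : N (o0 k) w <= 0.
Proof. apply: leq_set0 => y; rewrite inE rk0_w; have := rk0_le hw y; lia. Qed.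
Lemma N1w : N (o1 k) w <= 0.
Proof. apply: leq_set0 => y; rewrite inE rk1_w; have := rk1_le hw y; lia. Qed.
Lemma Nw0 : N w (o0 k) <= 0.
Proof.
apply: leq_set0 => y; rewrite inE !(rku hw) // v0 eqxx abetw.
by case: (_ == 0); case: (_ == 1).
Qed.
Lemma Nw1 : N w (o1 k) <= 1.
Proof.
apply: (leq_set1 (a := o0 k)) => y; rewrite inE !(rku hw) // v1 /= abetw.
case: eqP => [y0 _|_]; first by apply/eqP; rewrite eq0 y0.
by case: (_ == 1).
Qed.

Local Notation Gts := (@Gts k w).
Local Notation Lts := (@Lts k w).
Local Notation abet := (@abet k w).

Lemma N0z (z : 'I_(k+2)) : 1 < z -> nat_of_ord z != nat_of_ord w -> N (o0 k) z <= 2 + #|Gts z|.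
Proof.
move=> z2 zw.
apply: (@leq_trans #|w |: (o1 k |: Gts z)|).
  apply: subset_leq_card; apply/subsetP=> y; rewrite !inE eqw eq1 !rk0.
  have := ltn_ord y; move: z2 zw; repeat (case: eqP => ?); lia.
by rewrite !cardsU1 addnA leq_add2r; case: (_ \notin _); case: (_ \notin _).
Qed.

Lemma N1z (z : 'I_(k+2)) : 1 < z -> nat_of_ord z != nat_of_ord w -> N (o1 k) z <= 2 + #|Lts z|.
Proof.
move=> z2 zw.
apply: (@leq_trans #|w |: (o0 k |: Lts z)|).
  apply: subset_leq_card; apply/subsetP=> y; rewrite !inE eqw eq0 !rk1.
  have := ltn_ord y; have := ltn_ord z; move: z2 zw; repeat (case: eqP => ?); lia.
by rewrite !cardsU1 addnA leq_add2r; case: (_ \notin _); case: (_ \notin _).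
Qed.

Lemma Nz0 (z : 'I_(k+2)) : 1 < z -> N z (o0 k) <= ~~ abet z.
Proof.
move=> z2; case ab: (abet z) => /=.
  by apply: leq_set0 => y; rewrite inE !(rku hw) // v0 eqxx ab; case: (_ == 0); case: (_ == 1).
apply: (leq_set1 (a := o1 k)) => y; rewrite inE !(rku hw) // v0 eqxx ab /=.
case: eqP => // _; case: eqP => [y1 _|_ //]; by apply/eqP; rewrite eq1 y1.
Qed.

Lemma Nz1 (z : 'I_(k+2)) : 1 < z -> N z (o1 k) <= abet z.
Proof.
move=> z2; case ab: (abet z) => /=.
  apply: (leq_set1 (a := o0 k)) => y; rewrite inE !(rku hw) // v1 /= ab /=.
  by case: eqP => [y0 _|_]; [apply/eqP; rewrite eq0 y0 | case: (_ == 1)].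
by apply: leq_set0 => y; rewrite inE !(rku hw) // v1 /= ab; case: (_ == 0); case: (_ == 1).
Qed.

Lemma GL (z : 'I_(k+2)) : 1 < z -> nat_of_ord z != nat_of_ord w -> #|Gts z| + #|Lts z| <= k - 2.
Proof.
move=> z2 zw.
have disj : Gts z :&: Lts z = set0.
  apply/setP=> y; rewrite !inE; apply/negP=> /andP[/andP[_ h1] /andP[_ h2]]; lia.
rewrite -cardsUI disj cards0 addn0.
set X := ~: [set o0 k; o1 k].
have cX : #|X| = k.
  have e : (o0 k != o1 k) = true by [].
  have := cardsC [set o0 k; o1 k]; rewrite cards2 card_ord e /X; lia.
have wX : w \in X by rewrite !inE negb_or (w0 hw) (w1 hw).
have zX : z \in X :\ w by rewrite !inE negb_or eq0 eq1 eqw; lia.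
have c2 : #|(X :\ w) :\ z| = k - 2.
  have := cardsD1 w X; have := cardsD1 z (X :\ w); rewrite wX zX; lia.
rewrite -c2; apply: subset_leq_card; apply/subsetP=> y.
rewrite !inE !negb_or eqw eq0 eq1 -!val_eqE /=; lia.
Qed.
End P.

Set Implicit Arguments.
Unset Strict Implicit.

Definition o2 : 'I_(1+2) := Ordinal (isT : 2 < 1 + 2).

Section K3.
Variables v vv : 'I_(1+2).
Hypothesis hv : (v = o0 1 /\ vv = o1 1) \/ (v = o1 1 /\ vv = o0 1).
Local Notation g := (K2_join_Kbar 1).
Local Notation E := (edges g).

Lemma nvv : (v == vv) = false. Proof. by case: hv => [[ea eb]|[ea eb]]; rewrite ?ea ?eb. Qed.
Lemma nvo : (v == o2) = false. Proof. by case: hv => [[ea eb]|[ea eb]]; rewrite ?ea ?eb. Qed.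
Lemma nwo : (vv == o2) = false. Proof. by case: hv => [[ea eb]|[ea eb]]; rewrite ?ea ?eb. Qed.
Lemma nwv : (vv == v) = false. Proof. by rewrite eq_sym nvv. Qed.
Lemma nov : (o2 == v) = false. Proof. by rewrite eq_sym nvo. Qed.
Lemma now : (o2 == vv) = false. Proof. by rewrite eq_sym nwo. Qed.
Definition neqs := (nvv, nvo, nwo, nwv, nov, now, eqxx).

Lemma all3 x : x = v \/ x = vv \/ x = o2.
Proof.
have [e|[e|e]] : x = o0 1 \/ x = o1 1 \/ x = o2.
  case: x => [[|[|[|m]]] hm] //; [left|right;left|right;right]; exact/val_inj.
- by case: hv => [[-> _]|[_ ->]]; [left|right;left].
- by case: hv => [[_ ->]|[-> _]]; [right;left|left].
- by right; right.
Qed.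

Definition e1 := [set v; vv].
Definition e2 := [set v; o2].
Definition e3 := [set vv; o2].

Lemma edK3 e : e \in E -> e = e1 \/ e = e2 \/ e = e3.
Proof.
move/edgeP=> [a [b [gab _ ->]]].
have ab : a != b by move: gab => /andP[].
rewrite /e1 /e2 /e3.
have [ea|[ea|ea]] := all3 a; have [eb|[eb|eb]] := all3 b; rewrite ea eb in ab *.
all: try by rewrite eqxx in ab.
- by left.
- by right; left.
- by left; rewrite setUC.
- by right; right.
- by right; left; rewrite setUC.
- by right; right; rewrite setUC.
Qed.

Lemma hub2 : nat_of_ord v < 2 /\ nat_of_ord vv < 2.
Proof. by case: hv => [[ea eb]|[ea eb]]; rewrite ?ea ?eb. Qed.

Lemma inE3 : [/\ e1 \in E, e2 \in E & e3 \in E].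
Proof.
have [h1 h2] := hub2.
by rewrite /e1 /e2 /e3 !edge_set2 /K2_join_Kbar !neqs h1 h2.
Qed.

Definition r (e : {set 'I_(1+2)}) : nat := 2 * (v \notin e) + (o2 \in e).
Lemma r1 : r e1 = 0. Proof. by rewrite /r /e1 !inE !neqs. Qed.
Lemma r2 : r e2 = 1. Proof. by rewrite /r /e2 !inE !neqs. Qed.
Lemma r3 : r e3 = 3. Proof. by rewrite /r /e3 !inE !neqs. Qed.

Definition D1 : rel {set 'I_(1+2)} := fun e f => (e \in E) && (f \in E) && (r f < r e).

Lemma K3_orientable (p : nat) : 4 <= p -> deg g v = 2 ->
  f_edge_orientable g (f_pv g p v).
Proof.
move=> hp hd; exists D1.
have [E1 E2 E3] := inE3.
split.
- split.
  { move=> x y /andP[/andP[xE yE] rxy]; split => //.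
    have [ex|[ex|ex]] := edK3 xE; have [ey|[ey|ey]] := edK3 yE; rewrite ex ey in rxy *; rewrite ?r1 ?r2 ?r3 in rxy.
    all: try by [].
    all: rewrite /line_adj /=; apply/andP; split; [apply/negP=> /eqP/(congr1 r); rewrite ?r1 ?r2 ?r3 //|].
    all: apply/set0Pn.
    + by exists v; rewrite !inE !neqs.
    + by exists vv; rewrite !inE !neqs.
    + by exists o2; rewrite !inE !neqs. }
  { move=> x y xE yE /andP[xy _]; rewrite /D1 xE yE /=.
  have [ex|[ex|ex]] := edK3 xE; have [ey|[ey|ey]] := edK3 yE; rewrite ex ey ?r1 ?r2 ?r3 //.
  all: by move: xy; rewrite ex ey eqxx. }
- apply: kp_ws; first by move=> x; rewrite /D1 ltnn andbF.
  move=> W sW nW; left.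
  have [y yW] := set0Pn _ nW.
  case: (arg_minnP r yW) => x xW mx.
  by exists x => // z zW; rewrite /D1 negb_and -leqNgt (mx _ zW) orbT.
move=> x xE; rewrite /f_pv /outdeg.
have [ex|[ex|ex]] := edK3 xE; rewrite ex.
- have -> : v \in e1 by rewrite !inE eqxx.
  rewrite hd; apply: leq_trans (_ : 1 + 0 <= 2) => //; rewrite leq_add2l leqn0 cards_eq0.
  by apply/eqP/setP=> y; rewrite !inE /D1 r1 ltn0 !andbF.
- have -> : v \in e2 by rewrite !inE eqxx.
  rewrite hd; apply: leq_trans (_ : 1 + 1 <= 2) => //; rewrite leq_add2l.
  apply: (@leq_trans #|[set e1]|); last by rewrite cards1.
  apply: subset_leq_card; apply/subsetP=> y; rewrite inE /D1 r2 => /andP[yE /andP[_ h]].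
  have [ey|[ey|ey]] := edK3 yE; move: h; rewrite ey ?r1 ?r2 ?r3 // => _; by rewrite ?inE ?eqxx.
- have -> : (v \in e3) = false by rewrite !inE !neqs.
  suff h2 : #|[set y in E | D1 e3 y]| <= 2 by lia.
  apply: (@leq_trans #|[set e1; e2]|); last by rewrite cards2; case: (_ != _).
  apply: subset_leq_card; apply/subsetP=> y; rewrite inE /D1 r3 => /andP[yE /andP[_ h]].
  have [ey|[ey|ey]] := edK3 yE; move: h; rewrite ey ?r1 ?r2 ?r3 // => _; by rewrite ?inE ?eqxx ?orbT.
Qed.
End K3.

Set Implicit Arguments.
Unset Strict Implicit.

Lemma main_big k (v : 'I_(k+2)) (hv2 : 1 < v) (hd : deg (K2_join_Kbar k) v = 2) p
  (hp4 : 4 <= p) (hpk : k + 1 <= p) :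
  f_edge_orientable (K2_join_Kbar k) (f_pv (K2_join_Kbar k) p v).
Proof.
exists (D v); split.
- exact: orient hv2.
- apply: kp_ws; [exact: Dirr | exact: (@kerH k v hv2)].
move=> e eE; rewrite /f_pv hd.
have [z [[ez z0]|[ez z1]]] := edge_form eE; rewrite ez.
- have oz : o0 k != z by rewrite eq_sym.
  have hb := outb v oz.
  have [zv|zv] := eqVneq z v.
    rewrite zv in hb *; rewrite !inE eqxx orbT.
    have := N0w hv2; have := Nw0 hv2; lia.
  have [z1|z1] := eqVneq z (o1 k).
    rewrite z1 in hb *; rewrite !inE (w0 hv2) (w1 hv2) /=.
    have := N01 hv2; have := N10 hv2; lia.
  have z2 : 1 < z := big2 z0 z1.
  have zv' : nat_of_ord z != nat_of_ord v by rewrite -eqw.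
  have -> : (v \in [set o0 k; z]) = false by rewrite !inE (w0 hv2) eq_sym eqw (negbTE zv').
  have h1 := N0z hv2 z2 zv'; have h2 := Nz0 hv2 z2; have h3 := GL hv2 z2 zv'.
  move: h2; rewrite /abet (negbTE zv') /=.
  have := ltn_ord z; have := ltn_ord v.
  case: (leqP #|Lts v z| #|Gts v z|) => h /=; lia.
- have oz : o1 k != z by rewrite eq_sym.
  have hb := outb v oz.
  have [zv|zv] := eqVneq z v.
    rewrite zv in hb *; rewrite !inE eqxx orbT.
    have := N1w hv2; have := Nw1 hv2; lia.
  have [z0|z0] := eqVneq z (o0 k).
    rewrite z0 in hb *; rewrite !inE (w0 hv2) (w1 hv2) /=.
    have := N01 hv2; have := N10 hv2; lia.
  have z2 : 1 < z := big2 z0 z1.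
  have zv' : nat_of_ord z != nat_of_ord v by rewrite -eqw.
  have -> : (v \in [set o1 k; z]) = false by rewrite !inE (w1 hv2) eq_sym eqw (negbTE zv').
  have h1 := N1z hv2 z2 zv'; have h2 := Nz1 hv2 z2; have h3 := GL hv2 z2 zv'.
  move: h2; rewrite /abet (negbTE zv') /=.
  have := ltn_ord z; have := ltn_ord v.
  case: (leqP #|Lts v z| #|Gts v z|) => h /=; lia.
Qed.

Lemma deg_hub k (u : 'I_(k+2)) : nat_of_ord u < 2 -> deg (K2_join_Kbar k) u = k + 1.
Proof.
move=> hu; rewrite /deg.
have -> : [set x | K2_join_Kbar k u x] = [set~ u].
  by apply/setP=> x; rewrite !inE /K2_join_Kbar hu /= andbT eq_sym.
rewrite cardsC1 card_ord; lia.
Qed.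

Theorem mainTheorem17 (k : nat) (hk : 1 <= k) (v : 'I_(k + 2))
    (hv : deg (K2_join_Kbar k) v = 2) (p : nat)
    (hp : maxn 4 (maxdeg (K2_join_Kbar k)) <= p) :
  f_edge_orientable (K2_join_Kbar k) (f_pv (K2_join_Kbar k) p v).
Proof.
have hmd : k + 1 <= maxdeg (K2_join_Kbar k).
  rewrite -(@deg_hub k (o0 k)) //; exact: leq_bigmax.
have hp4 : 4 <= p by move: hp; rewrite geq_max => /andP[].
have hpk : k + 1 <= p by move: hp; rewrite geq_max => /andP[_ h]; apply: leq_trans h.
case: (ltnP 1 v) => hv2.
  exact: main_big.
have k1 : k = 1 by move: hv; rewrite deg_hub //; lia.
subst k.
have [e|e] := ord01 hv2.
  by apply: (K3_orientable (vv := o1 1)) => //; left.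
by apply: (K3_orientable (vv := o0 1)) => //; right.
Qed.
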